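(* Let $p$ be an odd prime, $q$ a power of $p$, $R=\mathbb{F}_q[t]$, $K=\mathbb{F}_q(t)$, $K^{\rm sep}$ a separable closure of $K$, and $\mathcal{O}_{K^{\rm sep}}$ the integral closure of $R$ in $K^{\rm sep}$. Let $S$ be any subring of $\mathcal{O}_{K^{\rm sep}}$ containing $R$. Then: (a) for every finite set $A\subseteq S$ there exists $x\in S$, neither zero nor a unit of $S$, such that $(x)+(a_i)=S$ for every $a_i\in A\setminus\{0\}$; (b) for every finite set $A\subseteq S$ with $0\notin A$ and every $a\in S$ that is neither zero nor a unit, there exists $g\in S$ such that: for every $a_i\in A$, $1+a_ig$ is neither zero nor a unit; for every $a_i\in A$, $(a)+(1+a_ig)=S$; and for distinct $a_i,a_j\in A$, $(1+a_ig)+(1+a_jg)=S$. (All ideals are ideals of $S$.) *)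

(* Defs.v *)
From HB Require Import structures.
From mathcomp Require Import all_boot all_order all_algebra all_field.
From mathcomp Require Import fraction.
Set Implicit Arguments. Unset Strict Implicit. Unset Printing Implicit Defensive.
Import Order.TTheory GRing.Theory Num.Theory.
Local Open Scope ring_scope.

(* R = F[t] with F = F_q, K = {fraction {poly F}} = F_q(t).
   L together with the field embedding iota : K -> L plays the role of K^sep. *)

Definition sep_alg_over (K L : fieldType) (iota : {rmorphism K -> L}) (x : L) :=
  exists2 P : {poly K}, (P != 0) && separable_poly P & root (map_poly iota P) x.

Definition is_sep_closure (K L : fieldType) (iota : {rmorphism K -> L}) :=
  (forall x : L, sep_alg_over iota x) /\
  (forall P : {poly K}, separable_poly P -> (1 < size P)%N ->
     exists x : L, root (map_poly iota P) x).

Definition integral_over_polyF (F : fieldType) (L : fieldType)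
  (iota : {rmorphism {fraction {poly F}} -> L}) (x : L) :=
  exists2 P : {poly {poly F}}, P \is monic &
    root (map_poly (fun r : {poly F} => iota (@FracField.tofrac _ r)) P) x.

Definition unit_in (L : fieldType) (S : {pred L}) (x : L) :=
  exists2 y, y \in S & x * y = 1.

(* (x) + (y) = S, as ideals of the subring S *)
Definition comax_in (L : fieldType) (S : {pred L}) (x y : L) :=
  exists u v, [/\ u \in S, v \in S & u * x + v * y = 1].

(* Main.v *)
Require Import Defs.
From HB Require Import structures.
From mathcomp Require Import all_boot all_order all_algebra all_field.
From mathcomp Require Import fraction.
Import Order.TTheory GRing.Theory Num.Theory.
From mathcomp Require Import ring.
Local Open Scope ring_scope.
Lemma sc_1 {L : fieldType} {S : {pred L}} : GRing.subring_closed S -> 1 \in S.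
Proof. by case. Qed.
Lemma sc_B {L : fieldType} {S : {pred L}} : GRing.subring_closed S ->
  forall x y, x \in S -> y \in S -> x - y \in S.
Proof. by case=> _ H _ x y hx hy; apply: H. Qed.
Lemma sc_M {L : fieldType} {S : {pred L}} : GRing.subring_closed S ->
  forall x y, x \in S -> y \in S -> x * y \in S.
Proof. by case=> _ _ H x y hx hy; apply: H. Qed.
Lemma sc_0 {L : fieldType} {S : {pred L}} : GRing.subring_closed S -> 0 \in S.
Proof. by move=> h; rewrite -(subrr (1:L)); apply: (sc_B h) => //; apply: sc_1. Qed.
Lemma sc_N {L : fieldType} {S : {pred L}} : GRing.subring_closed S ->
  forall x, x \in S -> - x \in S.
Proof. by move=> h x hx; rewrite -sub0r; apply: (sc_B h) => //; apply: sc_0. Qed.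
Lemma sc_D {L : fieldType} {S : {pred L}} : GRing.subring_closed S ->
  forall x y, x \in S -> y \in S -> x + y \in S.
Proof. by move=> h x y hx hy; rewrite -[y]opprK; apply: (sc_B h) => //; apply: sc_N. Qed.

Lemma horner_in (L : fieldType) (S : {pred L}) (Ssub : GRing.subring_closed S)
  (R : nzRingType) (phi : {rmorphism R -> L}) (Rin : forall r, phi r \in S)
  (b : L) (hb : b \in S) (p : {poly R}) : (map_poly phi p).[b] \in S.
Proof.
elim/poly_ind: p => [|p c IH]; first by rewrite rmorph0 horner0 sc_0.
rewrite rmorphD rmorphM /= map_polyX map_polyC !hornerE.
by apply: (sc_D Ssub); [apply: (sc_M Ssub) | apply: Rin].
Qed.

Lemma norm_elt (L : fieldType) (S : {pred L}) (Ssub : GRing.subring_closed S)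
  (R : nzRingType) (phi : {rmorphism R -> L}) (Rin : forall r, phi r \in S)
  (b : L) (hb : b \in S) (b0 : b != 0) (P : {poly R}) :
  P != 0 -> root (map_poly phi P) b ->
  exists r, r != 0 /\ exists2 e, e \in S & phi r = b * e.
Proof.
elim/poly_ind: P => [|p c IH]; first by rewrite eqxx.
move=> hP; rewrite /root rmorphD rmorphM /= map_polyX map_polyC !hornerE.
have [c0|c0] := eqVneq c 0.
  rewrite c0 raddf0 addr0 mulf_eq0 (negbTE b0) orbF => hr.
  apply: IH hr; apply: contra hP => /eqP ->; by rewrite mul0r add0r c0 polyC0.
move=> /eqP hr; exists c; split => //.
exists (- (map_poly phi p).[b]); first by apply: (sc_N Ssub); apply: horner_in.
by apply/eqP; rewrite mulrN mulrC -addr_eq0 addrC; apply/eqP.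
Qed.
Lemma nonunit_poly (F : fieldType) (L : fieldType) (S : {pred L})
  (phi : {rmorphism {poly F} -> L}) (phi_inj : injective phi)
  (SO : forall y, y \in S -> exists2 P : {poly {poly F}}, P \is monic &
          root (map_poly phi P) y)
  (x : {poly F}) : (1 < size x)%N ->
  ~ (exists2 y, y \in S & phi x * y = 1).
Proof.
move=> sx [y yS hxy]; have [P Pm hr] := SO y yS.
have Pn0 : P != 0 by apply: monic_neq0.
set n := (size P).-1.
have sP : size P = n.+1 by rewrite /n prednK // size_poly_gt0.
pose W := \sum_(i < n.+1) P`_i * x ^+ (n - i).
have hW : phi W = 0.
  have : (map_poly phi P).[y] * (phi x) ^+ n = 0 by rewrite (rootP hr) mul0r.
  have sm : (size (map_poly phi P) <= n.+1)%N.
    by rewrite size_map_poly_id0 ?sP // (monicP Pm) rmorph1 oner_neq0.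
  rewrite (horner_coef_wide y sm) mulr_suml => <-.
  rewrite rmorph_sum; apply: eq_bigr => i _.
  rewrite coef_map rmorphM rmorphXn -mulrA; congr (_ * _).
  have hi : (i <= n)%N by rewrite -ltnS.
  have -> : phi x ^+ n = phi x ^+ (n - i) * phi x ^+ i by rewrite -exprD subnK.
  rewrite mulrCA -exprMn [y * _]mulrC hxy expr1n mulr1.
  by [].
have W0 : W = 0 by apply: phi_inj; rewrite hW rmorph0.
move: W0; rewrite /W big_ord_recr /= subnn expr0 mulr1.
have -> : P`_n = 1 by move/monicP: Pm; rewrite /lead_coef sP.
move/eqP; rewrite addr_eq0 => /eqP hS.
have : x %| 1.
  rewrite -dvdpNr -hS.
  apply: (big_ind (fun q => x %| q)) => //.
    by move=> a b ha hb; apply: dvdp_add.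
  move=> i _; apply: dvdp_mull; apply: dvdp_exp => //.
  by rewrite subn_gt0.
by rewrite dvdp1 => /eqP h; move: sx; rewrite h.
Qed.
Lemma size_x0 (F : fieldType) (Q : {poly F}) : Q != 0 -> (1 < size (Q * 'X + 1)%R)%N.
Proof.
move=> hQ; rewrite size_addl size_mulX // ?size_poly1 ltnS ?size_poly_gt0 //.
Qed.

Lemma build_g (L : fieldType) (S : {pred L}) (Ssub : GRing.subring_closed S)
  (F : fieldType) (phi : {rmorphism {poly F} -> L}) (Rin : forall r, phi r \in S)
  (NE : forall b, b \in S -> b != 0 ->
     exists r, r != 0 /\ exists2 e, e \in S & phi r = b * e)
  (A : seq L) : {subset A <= S} -> 0 \notin A ->
  forall (c : L) (M : {poly F}), c \in S -> M != 0 ->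
  exists2 k, k \in S & forall ai, ai \in A ->
    exists2 x : {poly F}, (1 < size x)%N &
      exists2 z, z \in S & 1 + ai * (c + phi M * k) = phi x * z.
Proof.
elim: A => [|a0 A IH] hA h0 c M cS M0.
  by exists 0 => //; apply: sc_0.
have a0S : a0 \in S by apply: hA; rewrite mem_head.
have a00 : a0 != 0 by apply: contraNneq h0 => <-; rewrite mem_head.
have [q0 [q00 [e eS he]]] := NE a0 a0S a00.
pose x0 := (M * q0) * 'X + 1.
have sx0 : (1 < size x0)%N by apply: size_x0; rewrite mulf_neq0.
have x00 : x0 != 0 by rewrite -size_poly_gt0 (ltn_trans _ sx0).
pose g0 := (1 + a0 * c) * phi 'X * e.
have g0S : g0 \in S.
  apply: (sc_M Ssub) => //; apply: (sc_M Ssub) => //.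
  by apply: (sc_D Ssub); [apply: sc_1 | apply: (sc_M Ssub)].
have hA' : {subset A <= S} by move=> y hy; apply: hA; rewrite inE hy orbT.
have h0' : 0 \notin A by apply: contra h0 => h; rewrite inE h orbT.
have c'S : c + phi M * g0 \in S by apply: (sc_D Ssub) => //; apply: (sc_M Ssub).
have [k' k'S Hk'] := IH hA' h0' (c + phi M * g0) (M * x0) c'S (mulf_neq0 M0 x00).
have hx0 : phi x0 = phi M * phi q0 * phi 'X + 1 by rewrite rmorphD !rmorphM rmorph1.
exists (g0 + phi x0 * k').
  by apply: (sc_D Ssub) => //; apply: (sc_M Ssub).
move=> ai; rewrite inE => /orP [/eqP ->|hai].
  exists x0 => //; exists (1 + a0 * c + a0 * phi M * k').
    apply: (sc_D Ssub); first by apply: (sc_D Ssub); [apply: sc_1 | apply: (sc_M Ssub)].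
    by apply: (sc_M Ssub) => //; apply: (sc_M Ssub).
  rewrite hx0 he /g0; ring.
have [x hx [z zS hz]] := Hk' ai hai.
exists x => //; exists z => //; rewrite -hz rmorphM /=; ring.
Qed.
Lemma prod_in (L : fieldType) (S : {pred L}) (Ssub : GRing.subring_closed S)
  (T : eqType) (s : seq T) (P : pred T) (f : T -> L) :
  (forall y, y \in s -> f y \in S) -> \prod_(y <- s | P y) f y \in S.
Proof.
move=> hf; rewrite big_seq_cond; apply: (big_ind (fun x => x \in S)).
- exact: sc_1.
- by move=> x y; apply: (sc_M Ssub).
- by move=> i /andP [hi _]; apply: hf.
Qed.

Lemma prod_neq0 (L : fieldType) (T : eqType) (s : seq T) (P : pred T) (f : T -> L) :
  (forall y, y \in s -> P y -> f y != 0) -> \prod_(y <- s | P y) f y != 0.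
Proof.
move=> hf; rewrite big_seq_cond; apply: (big_ind (fun x => x != 0)).
- exact: oner_neq0.
- by move=> x y; apply: mulf_neq0.
- by move=> i /andP [hi hp]; apply: hf.
Qed.

Lemma prod_dvd (L : fieldType) (S : {pred L}) (Ssub : GRing.subring_closed S)
  (T : eqType) (s : seq T) (P : pred T) (f : T -> L) (x : T) :
  (forall y, y \in s -> f y \in S) -> x \in s -> P x ->
  exists2 h, h \in S & \prod_(y <- s | P y) f y = f x * h.
Proof.
move=> hf hx hp; rewrite (big_rem x) // hp.
exists (\prod_(y <- rem x s | P y) f y) => //.
by apply: prod_in => // y hy; apply: hf; apply: (mem_rem hy).
Qed.
Theorem lemma2p17 (F : finFieldType) (p : nat)
  (p_prime : prime p) (p_odd : odd p) (charF : p \in [pchar F])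
  (L : fieldType) (iota : {rmorphism {fraction {poly F}} -> L})
  (Lsep : is_sep_closure iota)
  (S : {pred L}) (Ssub : subring_closed S)
  (RS : forall r : {poly F}, iota (@FracField.tofrac _ r) \in S)
  (SO : forall x, x \in S -> integral_over_polyF iota x) :
  (forall A : seq L, {subset A <= S} ->
     exists x, [/\ x \in S, x != 0, ~ unit_in S x &
       forall ai, ai \in A -> ai != 0 -> comax_in S x ai])
  /\
  (forall (A : seq L) (a : L), {subset A <= S} -> 0 \notin A ->
     a \in S -> a != 0 -> ~ unit_in S a ->
     exists2 g, g \in S &
       [/\ forall ai, ai \in A -> 1 + ai * g != 0 /\ ~ unit_in S (1 + ai * g),
           forall ai, ai \in A -> comax_in S a (1 + ai * g) &
           forall ai aj, ai \in A -> aj \in A -> ai != aj ->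
             comax_in S (1 + ai * g) (1 + aj * g)]).
Proof.
pose phi : {rmorphism {poly F} -> L} := iota \o (@FracField.tofrac _).
have phi_inj : injective phi.
  move=> u v /= /fmorph_inj /eqP; rewrite tofrac_eq => /eqP //.
have Rin : forall r, phi r \in S by move=> r; exact: RS.
have SO' : forall y, y \in S -> exists2 P : {poly {poly F}}, P \is monic &
          root (map_poly phi P) y by move=> y yS; exact: SO.
have NE : forall b, b \in S -> b != 0 ->
     exists r, r != 0 /\ exists2 e, e \in S & phi r = b * e.
  move=> b bS b0; have [P Pm hr] := SO' b bS.
  exact: (@norm_elt _ _ Ssub _ phi Rin b bS b0 P (monic_neq0 Pm) hr).
have NU : forall x : {poly F}, (1 < size x)%N -> ~ unit_in S (phi x).
  by move=> x sx; apply: (@nonunit_poly _ _ S phi phi_inj SO' x sx).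
have phi0 : forall x : {poly F}, (1 < size x)%N -> phi x != 0.
  move=> x sx; apply/eqP => h; have : x = 0 by apply: phi_inj; rewrite h rmorph0.
  by move=> hx; move: sx; rewrite hx size_poly0.
split.
  move=> A hA.
  pose Pr := \prod_(y <- A | y != 0) y.
  have PrS : Pr \in S by apply: prod_in.
  have Pr0 : Pr != 0 by apply: prod_neq0.
  have [r [r0 [e eS he]]] := NE Pr PrS Pr0.
  have sx := @size_x0 _ r r0.
  exists (phi (r * 'X + 1)); split.
  - exact: Rin.
  - exact: phi0.
  - exact: NU.
  move=> ai hai ai0.
  have [h hS hh] := @prod_dvd _ _ Ssub _ A (fun y => y != 0) id ai hA hai ai0.
  exists 1, (- (h * e * phi 'X)); split.
  - exact: sc_1.
  - by apply: (sc_N Ssub); apply: (sc_M Ssub) => //; apply: (sc_M Ssub).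
  rewrite rmorphD rmorphM rmorph1 he.
  rewrite /Pr hh; ring.
move=> A a hA h0 aS a0 anu.
pose D := \prod_(y <- A) \prod_(z <- A | y != z) (y - z).
have DS : D \in S.
  apply: prod_in => // y hy; apply: prod_in => // z hz.
  by apply: (sc_B Ssub); apply: hA.
have D0 : D != 0.
  apply: prod_neq0 => y hy _; apply: prod_neq0 => z hz.
  by rewrite subr_eq0.
have [ra [ra0 [ea eaS hea]]] := NE a aS a0.
have [rD [rD0 [eD eDS heD]]] := NE D DS D0.
have M0 : ra * rD != 0 by rewrite mulf_neq0.
have [k kS Hk] := @build_g _ _ Ssub _ phi Rin NE A hA h0 0 (ra * rD) (sc_0 Ssub) M0.
exists (phi (ra * rD) * k); first by apply: (sc_M Ssub).
have hg : phi (ra * rD) * k = a * (ea * phi rD * k).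
  by rewrite rmorphM hea; ring.
have aiS : forall ai, ai \in A -> ai \in S by [].
split.
- move=> ai hai; split.
    apply/eqP => h; apply: anu; exists (- (ai * (ea * phi rD * k))).
      apply: (sc_N Ssub); apply: (sc_M Ssub); first exact: hA.
      by apply: (sc_M Ssub) => //; apply: (sc_M Ssub).
    move: h; rewrite hg => h.
    transitivity (1 - (1 + ai * (a * (ea * phi rD * k)))); first ring.
    by rewrite h subr0.
  move=> [y yS hy].
  have [x sx [z zS hz]] := Hk ai hai.
  rewrite add0r in hz.
  apply: (NU x sx); exists (z * y); first by apply: (sc_M Ssub).
  by rewrite mulrA -hz.
- move=> ai hai; exists (- (ai * (ea * phi rD * k))), 1; split.
  + apply: (sc_N Ssub); apply: (sc_M Ssub); first exact: hA.
    by apply: (sc_M Ssub) => //; apply: (sc_M Ssub).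
  + exact: sc_1.
  + rewrite hg; ring.
move=> ai aj hai haj hij.
have [h1 h1S hh1] := @prod_dvd _ _ Ssub _ A xpredT
   (fun y => \prod_(z <- A | y != z) (y - z)) ai
   (fun y hy => @prod_in _ _ Ssub _ A (fun z => y != z) (fun z => y - z) (fun z hz => sc_B Ssub y z (hA y hy) (hA z hz))) hai isT.
have [h2 h2S hh2] := @prod_dvd _ _ Ssub _ A (fun z => ai != z)
   (fun z => ai - z) aj
   (fun z hz => sc_B Ssub ai z (hA ai hai) (hA z hz)) haj hij.
pose m := phi ra * h2 * h1 * eD * k.
have mS : m \in S.
  apply: (sc_M Ssub) => //; apply: (sc_M Ssub) => //; apply: (sc_M Ssub) => //.
  by apply: (sc_M Ssub).
have hg2 : phi (ra * rD) * k = (ai - aj) * m.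
  rewrite rmorphM heD /D hh1 /= hh2 /m; ring.
rewrite hg2.
have aiS' := hA ai hai; have ajS' := hA aj haj.
exists (1 + ai * aj * m), (- (ai * ai * m)); split.
- apply: (sc_D Ssub); first exact: sc_1.
  by apply: (sc_M Ssub) => //; apply: (sc_M Ssub).
- by apply: (sc_N Ssub); apply: (sc_M Ssub) => //; apply: (sc_M Ssub).
- ring.
Qed.
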